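(* Let $\Delta\geq1$ be an integer and $\gamma,\eta$ reals with $0<\gamma\leq1/2$ and $\Delta^{-1/2}\leq\eta\leq\gamma^2/8$. Let $G$ be a finite graph with $d_G(v)\in\{\Delta-1,\Delta\}$ for all vertices $v$ and $\Delta_2(G)\leq\eta\Delta$. Let $A\subseteq V(G)$ be a $p$-random set with $p=\gamma/\Delta$ and let $G'=G\setminus(A\cup N_G(A))$. Then for all vertices $u,v$ of $G$, \[ \mathbb{E}\big(d_{G'}(v)\,\big|\,v\in G'\big)\leq(1-\gamma+\gamma^2)d_G(v), \] and (for $u\neq v$) \[ \mathbb{E}\big(d_{G'}(u,v)\,\big|\,u,v\in G'\big)\leq(1-\gamma+\gamma^2)d_G(u,v). \]
   Context: A $p$-random subset includes each element independently with probability $p$. $N_G(v)$ is the neighbourhood of $v$, $N_G(U)=\bigcup_{u\in U}N_G(u)$, $d_G(v)=|N_G(v)|$, $d_G(u,v)=|N_G(u)\cap N_G(v)|$, $\Delta_2(G)=\max_{u\neq v}d_G(u,v)$. $G\setminus S$ is the induced subgraph on $V(G)\setminus S$. *)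

(* Defs.v *)
(* Finite simple graph = symmetric irreflexive rel on a finType. *)
From HB Require Import structures.
From mathcomp Require Import all_boot all_order all_algebra.
Set Implicit Arguments. Unset Strict Implicit. Unset Printing Implicit Defensive.
Import Order.TTheory GRing.Theory Num.Theory.
Local Open Scope ring_scope.

Section Defs.
Variable T : finType.

Definition nbhd (e : rel T) (v : T) : {set T} := [set w | e v w].
Definition nbhdS (e : rel T) (U : {set T}) : {set T} := \bigcup_(u in U) nbhd e u.
Definition remaining (e : rel T) (A : {set T}) : {set T} := ~: (A :|: nbhdS e A).
Definition deg_after (e : rel T) (A : {set T}) (v : T) : nat :=
  #|nbhd e v :&: remaining e A|.
Definition codeg_after (e : rel T) (A : {set T}) (u v : T) : nat :=
  #|nbhd e u :&: nbhd e v :&: remaining e A|.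

Definition prand {R : numDomainType} (p : R) (A : {set T}) : R :=
  p ^+ #|A| * (1 - p) ^+ #|~: A|.

Definition cond_exp {R : numFieldType} (p : R) (ev : pred {set T})
  (X : {set T} -> R) : R :=
  (\sum_(A : {set T} | ev A) prand p A * X A) / (\sum_(A : {set T} | ev A) prand p A).
End Defs.

(* Main.v *)
Require Import Defs.
From HB Require Import structures.
From mathcomp Require Import all_boot all_order all_algebra.
From mathcomp Require Import zify ring lra.
Import Order.TTheory GRing.Theory Num.Theory.
Local Open Scope ring_scope.

Lemma sum_set_prod (R : comNzRingType) (T : finType) (h : T -> bool -> R) :
  \sum_(A : {set T}) \prod_(x : T) h x (x \in A) = \prod_(x : T) (h x true + h x false).
Proof.
rewrite (eq_bigr (fun x => \sum_(b : bool) h x b)); last by move=> x _; rewrite big_bool.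
rewrite bigA_distr_bigA /=.
rewrite (reindex (fun A : {set T} => [ffun x => x \in A])) /=; last first.
  exists (fun f : {ffun T -> bool} => [set x | f x]).
    by move=> A _; apply/setP => x; rewrite inE ffunE.
  by move=> f _; apply/ffunP => x; rewrite ffunE inE.
by apply: eq_bigr => A _; apply: eq_bigr => x _; rewrite ffunE.
Qed.

Lemma prand_disj (R : numDomainType) (T : finType) (p : R) (S : {set T}) :
  \sum_(A : {set T} | A :&: S == set0) prand p A = (1 - p) ^+ #|S|.
Proof.
pose h := fun (x : T) (b : bool) => if b then (if x \in S then 0 else p) else 1 - p.
transitivity (\sum_(A : {set T}) \prod_(x : T) h x (x \in A)).
  rewrite big_mkcond /=; apply: eq_bigr => A _.
  rewrite (bigID (mem A)) /=.
  have -> : \prod_(i | true && ~~ (i \in A)) h i (i \in A) = (1 - p) ^+ #|~: A|.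
    rewrite -prodr_const; apply: eq_big => [x|x]; first by rewrite inE.
    by move=> /= /negbTE ->.
  case: ifP => [/eqP AS|/set0Pn [y]].
    rewrite /prand -prodr_const; congr (_ * _); apply: eq_big => [x|x] //=.
    move=> xA; rewrite /h xA; case: ifP => // xS.
    by have := in_set0 x; rewrite -AS inE xA xS.
  rewrite inE => /andP [yA yS].
  by rewrite (bigD1 y) //= /h yA yS !mul0r.
have -> : (1 - p) ^+ #|S| = \prod_(x in S) (1 - p) by rewrite prodr_const.
rewrite sum_set_prod [RHS]big_mkcond /=.
by apply: eq_bigr => x _; rewrite /h; case: ifP => _; rewrite ?add0r // addrC subrK.
Qed.

Lemma rem_iff (T : finType) (e : rel T) (A : {set T}) (x : T) :
  symmetric e ->
  (x \in remaining e A) = (A :&: (x |: nbhd e x) == set0).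
Proof.
move=> sym; rewrite /remaining in_setC in_setU.
apply/idP/idP.
  move=> H; apply/eqP/setP => y; rewrite !inE.
  apply/negP => /andP [yA /orP [/eqP yx|exy]].
    by move: H; rewrite -yx yA.
  move: H; rewrite negb_or => /andP [_ /negP]; apply.
  by apply/bigcupP; exists y => //; rewrite inE sym.
move=> /eqP H; rewrite negb_or; apply/andP; split.
  apply/negP => xA; have := in_set0 x; rewrite -H !inE xA eqxx //.
apply/negP => /bigcupP [y yA]; rewrite inE => eyx.
have := in_set0 y; rewrite -H !inE yA sym eyx orbT //.
Qed.

Lemma sum_count (R : numDomainType) (T : finType) (e : rel T) (p : R)
  (S W : {set T}) : symmetric e ->
  \sum_(A : {set T} | A :&: S == set0) prand p A * (#|W :&: remaining e A|)%:R
  = \sum_(w in W) (1 - p) ^+ #|S :|: (w |: nbhd e w)|.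
Proof.
move=> sym.
have cnt : forall A : {set T}, (#|W :&: remaining e A|)%:R
   = \sum_(w in W) ((w \in remaining e A)%:R : R).
  move=> A; rewrite -sum1_card natr_sum.
  rewrite [RHS]big_mkcond /= [LHS]big_mkcond /=; apply: eq_bigr => w _.
  by rewrite inE; case: (w \in W); case: (w \in remaining e A).
under eq_bigr => A _ do rewrite cnt mulr_sumr.
rewrite exchange_big /=; apply: eq_bigr => w wW.
rewrite -prand_disj [RHS]big_mkcond /= [LHS]big_mkcond /=.
apply: eq_bigr => A _; rewrite rem_iff // (setIUr A S) setU_eq0.
case: (A :&: S == set0); case: (A :&: (w |: nbhd e w) == set0) => /=; rewrite ?mulr1 ?mulr0 //.
Qed.
Lemma bonf (R : realFieldType) (p : R) m : 0 <= p -> p <= 1 ->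
  (1 - p) ^+ m <= 1 - m%:R * p + (m%:R * p) ^+ 2 / 2.
Proof.
move=> p0 p1; elim: m => [|m IH]; first by rewrite expr0 mul0r expr0n /= mul0r subr0 addr0.
rewrite exprS.
have h1 : (1 - p) * (1 - p) ^+ m <= (1 - p) * (1 - m%:R * p + (m%:R * p) ^+ 2 / 2).
  by apply: ler_wpM2l => //; lra.
apply: (le_trans h1).
have m0 : 0 <= (m%:R : R) by apply: ler0n.
set M : R := m%:R.
have h3 : 0 <= M * M * (p * p * p) by apply: mulr_ge0; [apply: mulr_ge0|apply: mulr_ge0; [apply: mulr_ge0|]].
have h2 : 0 <= p * p by apply: mulr_ge0.
have -> : (m.+1%:R : R) = M + 1 by rewrite /M -natr1.
rewrite -subr_ge0.
set X := (X in 0 <= X).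
have -> : X = (p * p) / 2 + M * M * (p * p * p) / 2 by rewrite /X; field.
lra.
Qed.

Lemma cardUD (T : finType) (S X : {set T}) : #|S :|: X| = (#|S| + #|X :\: S|)%N.
Proof.
rewrite cardsU -(cardsID S X) setIC; lia.
Qed.

Lemma keybound (R : rcfType) (Delta : nat) (gamma eta : R) (n : nat) :
  (1 <= Delta)%N -> 0 < gamma -> gamma <= 1 / 2 ->
  (Num.sqrt (Delta%:R : R))^-1 <= eta -> eta <= gamma ^+ 2 / 8 ->
  Delta%:R - 3 - 2 * eta * Delta%:R <= (n%:R : R) ->
  (1 - gamma / Delta%:R) ^+ n <= 1 - gamma + gamma ^+ 2.
Proof.
move=> D1 g0 g2 se eg hn.
set D : R := Delta%:R.
have D0 : 0 < D by rewrite /D ltr0n.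
set s := Num.sqrt D.
have s0 : 0 < s by rewrite sqrtr_gt0.
have s2 : s ^+ 2 = D by rewrite sqr_sqrtr // ltW.
have es : 1 <= eta * s.
  by move: se; rewrite -/D -/s -[s^-1]mul1r ler_pdivrMr.
have e0 : 0 <= eta by apply: le_trans se; rewrite invr_ge0 ltW.
have g2s : 8 <= gamma ^+ 2 * s by nra.
have gs : 16 <= gamma * s by nra.
have sb : 32 <= s by nra.
have gD : 512 <= gamma * D by rewrite -s2; nra.
set p := gamma / D.
have pD : p * D = gamma by rewrite /p mulfVK // gt_eqF.
have p0 : 0 <= p by rewrite /p divr_ge0 // ltW.
have p1 : p <= 1.
  have D1' : 1 <= D by rewrite /D ler1n.
  have : gamma <= D by lra.
  by move=> gD'; rewrite /p ler_pdivrMr // mul1r.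
set m := minn n Delta.
have mn : (m <= n)%N by rewrite /m geq_minl.
have mD : (m%:R : R) <= D by rewrite /D ler_nat /m geq_minr.
have mlow : D - gamma * D / 2 <= m%:R.
  rewrite /m; case: (leqP n Delta) => h.
    apply: le_trans hn; nra.
  rewrite -/D; nra.
apply: (le_trans (ler_wiXn2l _ _ mn)); first by lra.
  by lra.

apply: (le_trans (@bonf R p m p0 p1)).
have x1 : m%:R * p <= gamma by rewrite -pD; nra.
have x2 : gamma - gamma ^+ 2 / 2 <= m%:R * p.
  have : (D - gamma * D / 2) * p <= m%:R * p by apply: ler_wpM2r.
  move=> h; apply: le_trans h; rewrite mulrBl.
  have -> : gamma * D / 2 * p = gamma / 2 * (p * D) by ring.
  rewrite pD (mulrC D p) pD; lra.
have x0 : 0 <= m%:R * p by apply: mulr_ge0.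
nra.
Qed.

Lemma leq_cardU (T : finType) (A B : {set T}) : (#|A :|: B| <= #|A| + #|B|)%N.
Proof. by rewrite cardsU leq_subr. Qed.

Lemma gen_bound (R : rcfType) (T : finType) (e : rel T) (Delta : nat) (gamma eta : R)
  (S W : {set T}) (ev : pred {set T}) :
  symmetric e -> (1 <= Delta)%N -> 0 < gamma -> gamma <= 1 / 2 ->
  (Num.sqrt (Delta%:R : R))^-1 <= eta -> eta <= gamma ^+ 2 / 8 ->
  (forall A, ev A = (A :&: S == set0)) ->
  (forall w, w \in W -> Delta%:R - 3 - 2 * eta * Delta%:R <= (#|(w |: nbhd e w) :\: S|%:R : R)) ->
  cond_exp (gamma / Delta%:R) ev (fun A => (#|W :&: remaining e A|)%:R)
  <= (1 - gamma + gamma ^+ 2) * #|W|%:R.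
Proof.
move=> sym D1 g0 g2 se eg evS hW.
have D0 : 0 < (Delta%:R : R) by rewrite ltr0n.
have D1' : 1 <= (Delta%:R : R) by rewrite ler1n.
have p1 : 0 < 1 - gamma / Delta%:R.
  rewrite subr_gt0 ltr_pdivrMr // mul1r; lra.
rewrite /cond_exp (eq_bigl _ _ evS) (eq_bigl _ _ evS) sum_count // prand_disj.
rewrite ler_pdivrMr ?exprn_gt0 //.
rewrite (eq_bigr (fun w => (1 - gamma / Delta%:R) ^+ #|S| * (1 - gamma / Delta%:R) ^+ #|(w |: nbhd e w) :\: S|)); last first.
  by move=> w _; rewrite cardUD exprD.
rewrite -mulr_sumr mulrC; apply: ler_wpM2r; first by rewrite exprn_ge0 // ltW.
have -> : (1 - gamma + gamma ^+ 2) * #|W|%:R = \sum_(w in W) (1 - gamma + gamma ^+ 2).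
  by rewrite sumr_const mulr_natr.
apply: ler_sum => w wW; exact: keybound (hW w wW).
Qed.

Theorem lemma3p2 (R : rcfType) (T : finType) (e : rel T)
  (Delta : nat) (gamma eta : R) :
  symmetric e -> irreflexive e ->
  (1 <= Delta)%N ->
  0 < gamma -> gamma <= 1 / 2 ->
  (Num.sqrt (Delta%:R : R))^-1 <= eta -> eta <= gamma ^+ 2 / 8 ->
  (forall v : T, #|nbhd e v| = Delta.-1 \/ #|nbhd e v| = Delta) ->
  (forall u v : T, u != v -> (#|nbhd e u :&: nbhd e v|%:R : R) <= eta * Delta%:R) ->
  let p := gamma / Delta%:R in
  (forall v : T,
     cond_exp p (fun A => v \in remaining e A)
       (fun A => (deg_after e A v)%:R)
     <= (1 - gamma + gamma ^+ 2) * #|nbhd e v|%:R) /\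
  (forall u v : T, u != v ->
     cond_exp p (fun A => (u \in remaining e A) && (v \in remaining e A))
       (fun A => (codeg_after e A u v)%:R)
     <= (1 - gamma + gamma ^+ 2) * #|nbhd e u :&: nbhd e v|%:R).
Proof.
move=> sym irr D1 g0 g2 se eg deg cod p.
have e0 : 0 <= eta by apply: le_trans se; rewrite invr_ge0 sqrtr_ge0.
have degl : forall w, (Delta%:R : R) <= #|nbhd e w|%:R + 1.
  by move=> w; rewrite natr1 ler_nat; case: (deg w) => ->; lia.
have neq : forall x y, e x y -> y != x.
  by move=> x y exy; apply/eqP => yx; move: exy; rewrite yx irr.
split.
  move=> v; apply: (@gen_bound R T e Delta gamma eta (v |: nbhd e v) (nbhd e v)) => //.
    by move=> A; rewrite rem_iff.
  move=> w; rewrite inE => evw.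
  have sub : nbhd e w \subset (nbhd e w :&: nbhd e v) :|: [set v] :|: ((w |: nbhd e w) :\: (v |: nbhd e v)).
    apply/subsetP => x; rewrite !inE => ->; rewrite /= ?orbT.
    by case: (x == v); case: (e v x); rewrite ?orbT.
  have c1 := subset_leq_card sub.
  have c2 := @leq_cardU _ (nbhd e w :&: nbhd e v :|: [set v]) ((w |: nbhd e w) :\: (v |: nbhd e v)).
  have c3 := @leq_cardU _ (nbhd e w :&: nbhd e v) [set v].
  rewrite cards1 in c3.
  have : (#|nbhd e w| <= #|nbhd e w :&: nbhd e v| + 1 + #|(w |: nbhd e w) :\: (v |: nbhd e v)|)%N by lia.
  rewrite -(ler_nat R) !natrD => h.
  have := cod w v (neq _ _ evw); have := degl w.
  have eD : 0 <= eta * Delta%:R := mulr_ge0 e0 (ler0n _ _); nra.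
move=> u v uv; apply: (@gen_bound R T e Delta gamma eta ((u |: nbhd e u) :|: (v |: nbhd e v)) (nbhd e u :&: nbhd e v)) => //.
  by move=> A; rewrite !rem_iff // (setIUr A (u |: nbhd e u)) setU_eq0.
move=> w; rewrite !inE => /andP [euw evw].
pose Z := (w |: nbhd e w) :\: ((u |: nbhd e u) :|: (v |: nbhd e v)).
have sub : nbhd e w \subset (nbhd e w :&: nbhd e u) :|: (nbhd e w :&: nbhd e v) :|: [set u] :|: [set v] :|: Z.
  rewrite /Z; apply/subsetP => x; rewrite !inE => ->; rewrite /= ?orbT.
  by case: (x == u); case: (x == v); case: (e u x); case: (e v x); rewrite ?orbT.
have c1 := subset_leq_card sub.
have c2 := @leq_cardU _ (nbhd e w :&: nbhd e u :|: nbhd e w :&: nbhd e v :|: [set u] :|: [set v]) Z.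
have c3 := @leq_cardU _ (nbhd e w :&: nbhd e u :|: nbhd e w :&: nbhd e v :|: [set u]) [set v].
have c4 := @leq_cardU _ (nbhd e w :&: nbhd e u :|: nbhd e w :&: nbhd e v) [set u].
have c5 := @leq_cardU _ (nbhd e w :&: nbhd e u) (nbhd e w :&: nbhd e v).
rewrite !cards1 in c3 c4.
have : (#|nbhd e w| <= #|nbhd e w :&: nbhd e u| + #|nbhd e w :&: nbhd e v| + 1 + 1 + #|Z|)%N by lia.
rewrite -(ler_nat R) !natrD => h.
have := cod w u (neq _ _ euw); have := cod w v (neq _ _ evw); have := degl w.
have eD : 0 <= eta * Delta%:R := mulr_ge0 e0 (ler0n _ _); nra.
Qed.
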